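(* Let $P$ be a program over a propositional signature $\Sigma$. Then $NF(P)$ is in normal form, and $NF(P)$ is strongly equivalent to $P$.
   Context: A program over $\Sigma$ is a finite set of rules $r$ of the form $a_1\vee\dots\vee a_k\leftarrow b_1,\dots,b_l,\ not\,c_1,\dots,not\,c_m,\ not\,not\,d_1,\dots,not\,not\,d_n$ with all atoms in $\Sigma$ and $k,l,m,n\ge 0$. Write $H(r)=\{a_1,\dots,a_k\}$, $B^+(r)=\{b_1,\dots,b_l\}$, $B^-(r)=\{c_1,\dots,c_m\}$, $B^{--}(r)=\{d_1,\dots,d_n\}$, and $B(r)=B^+(r)\cup\{not\,c: c\in B^-(r)\}\cup\{not\,not\,d: d\in B^{--}(r)\}$ (the body; its elements are called literals). For $I\subseteq\Sigma$, the reduct is $P^I=\{H(r)\leftarrow B^+(r): r\in P,\ B^-(r)\cap I=\emptyset,\ B^{--}(r)\subseteq I\}$. A set $I$ classically satisfies $r$ if $B^+(r)\subseteq I$, $B^-(r)\cap I=\emptyset$ and $B^{--}(r)\subseteq I$ together imply $H(r)\cap I\neq\emptyset$. An HT-interpretation $\langle X,Y\rangle$ with $X\subseteq Y$ is an HT-model of $P$ if $Y$ classically satisfies every rule of $P$ and $X$ classically satisfies every rule of $P^Y$. $Y$ is an answer set of $P$ if $\langle Y,Y\rangle$ is an HT-model of $P$ and no $\langle X,Y\rangle$ with $X\subsetneq Y$ is. $AS(P)$ denotes the set of answer sets. Programs $P_1,P_2$ are strongly equivalent if $AS(P_1\cup R)=AS(P_2\cup R)$ for every program $R$. A rule $r$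 is tautological if $H(r)\cap B^+(r)\ne\emptyset$, or $B^+(r)\cap B^-(r)\ne\emptyset$, or $B^-(r)\cap B^{--}(r)\ne\emptyset$. A rule $r\in P$ is minimal in $P$ if there is no $r'\in P$ with ($H(r')\subseteq H(r)$ and $B(r')\subsetneq B(r)$) or ($H(r')\subsetneq H(r)$ and $B(r')\subseteq B(r)$). $P$ is in normal form if: (i) for every atom $a$ and every $r\in P$, at most one of $a$, $not\,a$, $not\,not\,a$ is in $B(r)$; (ii) if $a\in H(r)$ then neither $a$ nor $not\,a$ is in $B(r)$; (iii) every rule of $P$ is minimal in $P$. The program $NF(P)$ is obtained from $P$ by: 1. removing all tautological rules; 2. in each remaining rule $r$, removing from $B^{--}(r)$ every atom that is in $B^+(r)$; 3. in each remaining rule $r$, removing from $H(r)$ every atom that is in $B^-(r)$; 4. removing from the resulting program all rules that are not minimal in it. *)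

(* Defs.v *)
From HB Require Import structures.
From mathcomp Require Import all_boot.
From mathcomp Require Import finmap.

Set Implicit Arguments.
Unset Strict Implicit.
Unset Printing Implicit Defensive.

Local Open Scope fset_scope.

(* A rule  H <- B+, not B-, not not B--  over the signature A,
   encoded as the quadruple (H, B+, B-, B--) of finite sets of atoms. *)
Definition rule (A : choiceType) : Type :=
  ({fset A} * {fset A} * {fset A} * {fset A})%type.

Definition program (A : choiceType) : Type := {fset rule A}.

Definition mkrule (A : choiceType) (h bp bn bnn : {fset A}) : rule A :=
  (h, bp, bn, bnn).
Definition H (A : choiceType) (r : rule A) : {fset A} := r.1.1.1.
Definition Bp (A : choiceType) (r : rule A) : {fset A} := r.1.1.2.
Definition Bn (A : choiceType) (r : rule A) : {fset A} := r.1.2.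
Definition Bnn (A : choiceType) (r : rule A) : {fset A} := r.2.

(* Literals: inl (inl a) = a, inl (inr a) = not a, inr a = not not a. *)
Definition literal (A : choiceType) : Type := ((A + A) + A)%type.

Definition body (A : choiceType) (r : rule A) : {fset literal A} :=
  [fset (inl (inl a) : literal A) | a in Bp r]
  `|` [fset (inl (inr a) : literal A) | a in Bn r]
  `|` [fset (inr a : literal A) | a in Bnn r].

Definition interp (A : choiceType) : Type := A -> Prop.

Definition subI (A : choiceType) (X Y : interp A) : Prop :=
  forall a, X a -> Y a.
Definition proper_subI (A : choiceType) (X Y : interp A) : Prop :=
  subI X Y /\ exists a, Y a /\ ~ X a.

Definition sat (A : choiceType) (I : interp A) (r : rule A) : Prop :=
  (forall b, b \in Bp r -> I b) ->
  (forall c, c \in Bn r -> ~ I c) ->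
  (forall d, d \in Bnn r -> I d) ->
  exists2 a, a \in H r & I a.

(* Membership in the reduct P^I = { H(r) <- B+(r) : r in P,
   B-(r) disjoint from I, B--(r) subset of I }. *)
Definition reduct (A : choiceType) (P : program A) (I : interp A)
    (r' : rule A) : Prop :=
  exists2 r, r \in P &
    [/\ (forall c, c \in Bn r -> ~ I c),
        (forall d, d \in Bnn r -> I d) &
        r' = mkrule (H r) (Bp r) fset0 fset0].

Definition HT_model (A : choiceType) (P : program A) (X Y : interp A) : Prop :=
  [/\ subI X Y,
      (forall r, r \in P -> sat Y r) &
      (forall r, reduct P Y r -> sat X r)].

Definition answer_set (A : choiceType) (P : program A) (Y : interp A) : Prop :=
  HT_model P Y Y /\ ~ (exists X, proper_subI X Y /\ HT_model P X Y).

Definition strongly_equivalent (A : choiceType) (P1 P2 : program A) : Prop :=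
  forall (R : program A) (Y : interp A),
    answer_set (P1 `|` R) Y <-> answer_set (P2 `|` R) Y.

Definition tautological (A : choiceType) (r : rule A) : bool :=
  [|| H r `&` Bp r != fset0, Bp r `&` Bn r != fset0 | Bn r `&` Bnn r != fset0].

Definition minimal_in (A : choiceType) (P : program A) (r : rule A) : bool :=
  all (fun r' : rule A =>
         ~~ (((H r' `<=` H r) && (body r' `<` body r))
             || ((H r' `<` H r) && (body r' `<=` body r))))
      (enum_fset P).

Definition normal_form (A : choiceType) (P : program A) : Prop :=
  forall r, r \in P ->
    [/\ (forall a, ~~ ((a \in Bp r) && (a \in Bn r))
                   /\ ~~ ((a \in Bp r) && (a \in Bnn r))
                   /\ ~~ ((a \in Bn r) && (a \in Bnn r))),
        (forall a, a \in H r -> (a \notin Bp r) && (a \notin Bn r)) &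
        minimal_in P r].

Definition NF_step1 (A : choiceType) (P : program A) : program A :=
  [fset r in P | ~~ tautological r].
Definition NF_step2 (A : choiceType) (P : program A) : program A :=
  [fset mkrule (H r) (Bp r) (Bn r) (Bnn r `\` Bp r) | r in P].
Definition NF_step3 (A : choiceType) (P : program A) : program A :=
  [fset mkrule (H r `\` Bn r) (Bp r) (Bn r) (Bnn r) | r in P].
Definition NF_step4 (A : choiceType) (P : program A) : program A :=
  [fset r in P | minimal_in P r].
Definition NF (A : choiceType) (P : program A) : program A :=
  NF_step4 (NF_step3 (NF_step2 (NF_step1 P))).

(* Main.v *)
Require Import Defs.
From mathcomp Require Import all_boot finmap.
From Stdlib Require Import Classical.

Set Implicit Arguments.
Unset Strict Implicit.
Unset Printing Implicit Defensive.
Local Open Scope fset_scope.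

Section S.
Variable A : choiceType.
Implicit Types (P Q R : program A) (r : rule A) (X Y : interp A).

Lemma in_sep (P : program A) (p : pred (rule A)) r :
  (r \in [fset x in P | p x]) = (r \in P) && p r.
Proof. by rewrite !inE. Qed.

Lemma in_img (f : rule A -> rule A) P x :
  (x \in [fset f r | r in P]) <-> exists2 r, r \in P & x = f r.
Proof.
split; first by move/imfsetP=> [r Hr ->]; exists r.
by move=> [r Hr ->]; apply: in_imfset.
Qed.

Definition HTsat X Y r : Prop :=
  sat Y r /\
  ((forall c, c \in Bn r -> ~ Y c) -> (forall d, d \in Bnn r -> Y d) ->
   (forall b, b \in Bp r -> X b) -> exists2 a, a \in H r & X a).

Lemma HT_modelE P X Y :
  HT_model P X Y <-> subI X Y /\ forall r, r \in P -> HTsat X Y r.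
Proof.
split.
- move=> [sXY h1 h2]; split => // r Hr; split; first exact: h1.
  move=> hn hnn hp.
  have := h2 (mkrule (H r) (Bp r) fset0 fset0).
  have Hred : reduct P Y (mkrule (H r) (Bp r) fset0 fset0) by exists r.
  move=> /(_ Hred); rewrite /sat /=.
  by apply => // ?; rewrite in_fset0.
- move=> [sXY h]; split => // [r Hr|r' [r Hr [hn hnn ->]]]; first by case: (h r Hr).
  rewrite /sat /= => hp _ _.
  by case: (h r Hr) => _; apply.
Qed.

Definition HTeq P Q := forall X Y, subI X Y ->
  (forall r, r \in P -> HTsat X Y r) <-> (forall r, r \in Q -> HTsat X Y r).

Lemma HTeq_trans P Q R : HTeq P Q -> HTeq Q R -> HTeq P R.
Proof. by move=> h1 h2 X Y s; rewrite (h1 X Y s) (h2 X Y s). Qed.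

Lemma HTeq_union P Q R : HTeq P Q -> HTeq (P `|` R) (Q `|` R).
Proof.
move=> h X Y s; split => hh r.
- rewrite in_fsetU => /orP [Hr|Hr]; last by apply: hh; rewrite in_fsetU Hr orbT.
  move: r Hr; apply/(h X Y s) => r Hr; apply: hh; by rewrite in_fsetU Hr.
- rewrite in_fsetU => /orP [Hr|Hr]; last by apply: hh; rewrite in_fsetU Hr orbT.
  move: r Hr; apply/(h X Y s) => r Hr; apply: hh; by rewrite in_fsetU Hr.
Qed.

Lemma HTeq_se P Q : HTeq P Q -> strongly_equivalent P Q.
Proof.
move=> h R Y.
have hu := HTeq_union R h.
have key : forall X, HT_model (P `|` R) X Y <-> HT_model (Q `|` R) X Y.
  move=> X; rewrite !HT_modelE; split=> [[s hh]|[s hh]]; split => //;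
  first [exact: (proj1 (hu X Y s) hh) | exact: (proj2 (hu X Y s) hh)].
rewrite /answer_set; split=> [[h1 h2]|[h1 h2]]; split.
- by apply/key.
- by move=> [X [pX hX]]; apply: h2; exists X; split => //; apply/key.
- by apply/key.
- by move=> [X [pX hX]]; apply: h2; exists X; split => //; apply/key.
Qed.

Lemma HTeq_img (f : rule A -> rule A) P :
  (forall X Y r, subI X Y -> HTsat X Y r <-> HTsat X Y (f r)) ->
  HTeq P [fset f r | r in P].
Proof.
move=> hf X Y s; split => hh r.
- by move/in_img=> [r0 Hr0 ->]; apply/(hf X Y r0 s); apply: hh.
- by move=> Hr; apply/(hf X Y r s); apply: hh; apply/in_img; exists r.
Qed.

Lemma fset0P (T : choiceType) (S1 S2 : {fset T}) a :
  S1 `&` S2 == fset0 = false -> a \in S1 -> a \in S2 -> False.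
Abort.

Lemma notin0 (T : choiceType) (S1 S2 : {fset T}) a :
  ~~ (S1 `&` S2 != fset0) -> a \in S1 -> a \in S2 -> False.
Proof.
rewrite negbK => /eqP E h1 h2.
have : a \in S1 `&` S2 by rewrite in_fsetI h1 h2.
by rewrite E in_fset0.
Qed.

Lemma taut_valid X Y r : subI X Y -> tautological r -> HTsat X Y r.
Proof.
move=> s; rewrite /tautological => /or3P [h|h|h];
  case/fset0Pn: h => a; rewrite in_fsetI => /andP [h1 h2].
- split; first by move=> hp _ _; exists a => //; apply: hp.
  by move=> _ _ hp; exists a => //; apply: hp.
- split; first by move=> hp hn _; case: (hn a h2); apply: hp.
  by move=> hn _ hp; case: (hn a h2); apply: s; apply: hp.
- split; first by move=> _ hn hnn; case: (hn a h1); apply: hnn.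
  by move=> hn hnn; case: (hn a h1); apply: hnn.
Qed.

Lemma step1_eq P : HTeq P (NF_step1 P).
Proof.
move=> X Y s; split => hh r.
- by rewrite in_sep => /andP [Hr _]; apply: hh.
- move=> Hr; case t: (tautological r); first exact: taut_valid.
  by apply: hh; rewrite in_sep Hr t.
Qed.

Lemma step2_eq P : HTeq P (NF_step2 P).
Proof.
apply: HTeq_img => X Y r s; rewrite /HTsat /sat /H /Bp /Bn /Bnn /mkrule /=.
split=> [[h1 h2]|[h1 h2]]; split.
- move=> hp hn hnn; apply: h1 => // d hd.
  case dp: (d \in r.1.1.2); first exact: hp.
  by apply: hnn; rewrite in_fsetD dp.
- move=> hn hnn hp; case: (classic (forall d, d \in r.2 -> Y d)) => E.
  + exact: h2.
  + exfalso; apply: E => d hd; apply: NNPP => nY.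
    case dp: (d \in r.1.1.2).
    * by apply: nY; apply: s; apply: hp.
    * by apply: nY; apply: hnn; rewrite in_fsetD dp.
- move=> hp hn hnn; apply: h1 => // d; rewrite in_fsetD => /andP [_ hd].
  exact: hnn.
- move=> hn hnn hp; apply: h2 => // d; rewrite in_fsetD => /andP [_ hd].
  exact: hnn.
Qed.

Lemma step3_eq P : HTeq P (NF_step3 P).
Proof.
apply: HTeq_img => X Y r s; rewrite /HTsat /sat /H /Bp /Bn /Bnn /mkrule /=.
split=> [[h1 h2]|[h1 h2]]; split.
- move=> hp hn hnn; case: (h1 hp hn hnn) => a ha Ya; exists a => //.
  rewrite in_fsetD ha andbT; apply/negP => an; exact: (hn a an).
- move=> hn hnn hp; case: (h2 hn hnn hp) => a ha Xa; exists a => //.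
  rewrite in_fsetD ha andbT; apply/negP => an; apply: (hn a an); exact: s.
- move=> hp hn hnn; case: (h1 hp hn hnn) => a; rewrite in_fsetD => /andP [_ ha] Ya.
  by exists a.
- move=> hn hnn hp; case: (h2 hn hnn hp) => a; rewrite in_fsetD => /andP [_ ha] Xa.
  by exists a.
Qed.

Lemma body_p r b : (inl (inl b) : literal A) \in body r -> b \in Bp r.
Proof.
rewrite /body !in_fsetU => /orP [/orP [h|h]|h].
- by move/imfsetP: h => [x hx [->]].
- by move/imfsetP: h => [x hx].
- by move/imfsetP: h => [x hx].
Qed.
Lemma body_n r b : (inl (inr b) : literal A) \in body r -> b \in Bn r.
Proof.
rewrite /body !in_fsetU => /orP [/orP [h|h]|h].
- by move/imfsetP: h => [x hx].
- by move/imfsetP: h => [x hx [->]].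
- by move/imfsetP: h => [x hx].
Qed.
Lemma body_nn r b : (inr b : literal A) \in body r -> b \in Bnn r.
Proof.
rewrite /body !in_fsetU => /orP [/orP [h|h]|h].
- by move/imfsetP: h => [x hx].
- by move/imfsetP: h => [x hx].
- by move/imfsetP: h => [x hx [->]].
Qed.
Lemma body_in_p r b : b \in Bp r -> (inl (inl b) : literal A) \in body r.
Proof. by move=> h; rewrite /body !in_fsetU; apply/orP; left; apply/orP; left; apply: in_imfset. Qed.
Lemma body_in_n r b : b \in Bn r -> (inl (inr b) : literal A) \in body r.
Proof. by move=> h; rewrite /body !in_fsetU; apply/orP; left; apply/orP; right; apply: in_imfset. Qed.
Lemma body_in_nn r b : b \in Bnn r -> (inr b : literal A) \in body r.
Proof. by move=> h; rewrite /body !in_fsetU; apply/orP; right; apply: in_imfset. Qed.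

Lemma dom_sat X Y r' r : H r' `<=` H r -> body r' `<=` body r ->
  HTsat X Y r' -> HTsat X Y r.
Proof.
move=> /fsubsetP sH /fsubsetP sB [h1 h2]; split.
- move=> hp hn hnn; case: h1.
  + by move=> b /body_in_p/sB/body_p; apply: hp.
  + by move=> b /body_in_n/sB/body_n; apply: hn.
  + by move=> b /body_in_nn/sB/body_nn; apply: hnn.
  + by move=> a /sH ha Ya; exists a.
- move=> hn hnn hp; case: h2.
  + by move=> b /body_in_n/sB/body_n; apply: hn.
  + by move=> b /body_in_nn/sB/body_nn; apply: hnn.
  + by move=> b /body_in_p/sB/body_p; apply: hp.
  + by move=> a /sH ha Ya; exists a.
Qed.

Definition msr r := (#|` H r| + #|` body r|)%N.

Lemma exists_min Q n r : (msr r < n)%N -> r \in Q ->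
  exists2 r'', r'' \in NF_step4 Q & (H r'' `<=` H r) && (body r'' `<=` body r).
Proof.
elim: n r => [//|n IH] r hm Hr.
case m: (minimal_in Q r).
  by exists r; [rewrite in_sep Hr m | rewrite !fsubset_refl].
move/negbT/allPn: m => [r' hr' /negPn /orP hd].
have Hr' : r' \in Q by [].
have [sH sB lt] : [/\ H r' `<=` H r, body r' `<=` body r & (msr r' < msr r)%N].
  case: hd => /andP [h1 h2].
  - split; [exact: h1 | exact: fproper_sub h2 |].
    rewrite /msr -addnS; apply: leq_add; [exact: fsubset_leq_card h1|exact: fproper_ltn_card h2].
  - split; [exact: fproper_sub h1 | exact: h2 |].
    rewrite /msr -addSn; apply: leq_add; [exact: fproper_ltn_card h1|exact: fsubset_leq_card h2].
have [r'' h1 /andP [s1 s2]] := IH r' (leq_trans lt hm) Hr'.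
exists r'' => //; apply/andP; split; [exact: fsubset_trans s1 sH | exact: fsubset_trans s2 sB].
Qed.

Lemma step4_eq P : HTeq P (NF_step4 P).
Proof.
move=> X Y s; split => hh r.
- by rewrite in_sep => /andP [Hr _]; apply: hh.
- move=> Hr; have [r'' h1 /andP [s1 s2]] := exists_min (ltnSn (msr r)) Hr.
  by apply: (dom_sat s1 s2); apply: hh.
Qed.

Lemma NF_eq P : HTeq (NF P) P.
Proof.
have h : HTeq P (NF P).
  apply: HTeq_trans (step1_eq P) _; apply: HTeq_trans (step2_eq _) _.
  apply: HTeq_trans (step3_eq _) _; exact: step4_eq.
by move=> X Y s; rewrite (h X Y s).
Qed.

Lemma NF_normal P : normal_form (NF P).
Proof.
move=> r; rewrite /NF /NF_step4 in_sep => /andP [Hr hmin].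
move/in_img: (Hr) => [r2 Hr2 E2].
move/in_img: Hr2 => [r1 Hr1 E1].
move: Hr1; rewrite in_sep => /andP [_ nt].
move: nt; rewrite /tautological !negb_or => /and3P [t1 t2 t3].
have e1 : Bp r = Bp r1 by rewrite E2 E1.
have e2 : Bn r = Bn r1 by rewrite E2 E1.
have e3 : Bnn r = Bnn r1 `\` Bp r1 by rewrite E2 E1.
have e4 : H r = H r1 `\` Bn r1 by rewrite E2 E1.
split.
- move=> a; rewrite e1 e2 e3 in_fsetD; split; [|split].
  + apply/negP => /andP [p n]; exact: (notin0 t2 p n).
  + by apply/negP => /andP [p /andP [np _]]; rewrite p in np.
  + apply/negP => /andP [n /andP [_ nn]]; exact: (notin0 t3 n nn).
- move=> a; rewrite e4 e1 e2 in_fsetD => /andP [nn h]; rewrite nn andbT.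
  apply/negP => p; exact: (notin0 t1 h p).
- apply/allP => r' hr'; move/allP: hmin; apply.
  by move: hr'; rewrite in_sep => /andP [].
Qed.

End S.

Theorem proposition1 (A : choiceType) (P : program A) :
  normal_form (NF P) /\ strongly_equivalent (NF P) P.
Proof. split; [exact: NF_normal | apply: HTeq_se; exact: NF_eq]. Qed.
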